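(* Let $T$ be a tree of order at least $6$ in which the set $S'(T)$ of weak support vertices is a maximum $2$-packing. Then $d_T(x,S'(T)\setminus\{x\})=3$ for every $x\in S'(T)$.
   Context: A weak support vertex is a vertex adjacent to exactly one leaf. A $2$-packing is a set of vertices pairwise at distance at least $3$; a maximum $2$-packing is one of maximum cardinality. $d_T(x,Y)=\min_{y\in Y}d_T(x,y)$. *)

(* Defs.v *)
(* finite simple graphs as symmetric irreflexive relations on a finType. *)
From mathcomp Require Import all_boot.
Set Implicit Arguments. Unset Strict Implicit. Unset Printing Implicit Defensive.

Section Graphs.
Variables (T : finType) (e : rel T).

Definition simple_graph : Prop := symmetric e /\ irreflexive e.

Definition connected_graph : Prop := forall x y : T, connect e x y.

Definition acyclic_graph : Prop :=
  forall (x : T) (p : seq T),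
    path e x p -> uniq (x :: p) -> 2 <= size p -> ~~ e (last x p) x.

Definition is_tree : Prop := [/\ simple_graph, connected_graph & acyclic_graph].

Definition nbhd (x : T) : {set T} := [set y | e x y].
Definition leaf (x : T) : bool := #|nbhd x| == 1.

Definition weak_support (x : T) : bool := #|[set y in nbhd x | leaf y]| == 1.
Definition weak_supports : {set T} := [set x | weak_support x].

Fixpoint ball (n : nat) (x : T) : {set T} :=
  match n with
  | 0 => [set x]
  | n'.+1 => ball n' x :|: [set y | [exists z in ball n' x, e z y]]
  end.

(* graph distance: least n with y within n steps of x
   (capped at #|T|, never reached in a connected graph) *)
Definition dist (x y : T) : nat :=
  \big[minn/#|T|]_(n < #|T| | y \in ball n x) n.

Definition dist_set (x : T) (Y : {set T}) : nat :=
  \big[minn/#|T|]_(y in Y) dist x y.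

Definition packing2 (S : {set T}) : Prop :=
  forall x y, x \in S -> y \in S -> x != y -> 3 <= dist x y.

Definition max_packing2 (S : {set T}) : Prop :=
  packing2 S /\ forall P : {set T}, packing2 P -> #|P| <= #|S|.

End Graphs.

(* Main.v *)
Require Import Defs.
From mathcomp Require Import all_boot.
Set Implicit Arguments. Unset Strict Implicit. Unset Printing Implicit Defensive.

Lemma bigmin_le (I : finType) (P : pred I) (F : I -> nat) m i0 :
  P i0 -> \big[minn/m]_(i | P i) F i <= F i0.
Proof.
move=> HP; have : i0 \in index_enum I by rewrite mem_index_enum.
elim: (index_enum I) => [|a r IH] //; rewrite inE big_cons => /orP [/eqP <-|Hi].
  by rewrite HP geq_minl.
case: ifP => _; last exact: IH.
by apply: leq_trans (geq_minr _ _) (IH Hi).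
Qed.

Section Aux.
Variables (T : finType) (e : rel T).

Lemma ballS n x y : (y \in ball e n.+1 x) = (y \in ball e n x) || [exists z in ball e n x, e z y].
Proof. by rewrite /= !inE. Qed.

Lemma ball0 x y : (y \in ball e 0 x) = (y == x).
Proof. by rewrite /= inE. Qed.

Lemma ball_step n x y : y \in ball e n x -> y \in ball e n.+1 x.
Proof. by move=> H; rewrite ballS H. Qed.

Lemma ball_mono m n x y : m <= n -> y \in ball e m x -> y \in ball e n x.
Proof.
elim: n => [|n IH]; first by rewrite leqn0 => /eqP ->.
rewrite leq_eqVlt => /orP [/eqP -> //|Hlt] H.
by apply: ball_step; apply: IH.
Qed.

Lemma ball_last n x c y : c \in ball e n x -> e c y -> y \in ball e n.+1 x.
Proof. by move=> Hc Hy; rewrite ballS; apply/orP; right; apply/existsP; exists c; rewrite Hc. Qed.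

Lemma ball_trans m n x y w : y \in ball e m x -> w \in ball e n y -> w \in ball e (m + n) x.
Proof.
move=> Hy; elim: n w => [|n IH] w.
  by rewrite ball0 addn0 => /eqP ->.
rewrite ballS addnS => /orP [H|/existsP [c /andP [Hc Hcw]]].
  by apply: ball_step; apply: IH.
by apply: (ball_last (IH _ Hc)).
Qed.

Lemma ball1 x y : (y \in ball e 1 x) = (y == x) || e x y.
Proof.
rewrite ballS ball0; congr (_ || _); apply/existsP/idP => [[z /andP [Hz H]]|H].
  by move: Hz; rewrite ball0 => /eqP <-.
by exists x; rewrite ball0 eqxx.
Qed.

Lemma ball_edge n x y z : e x y -> z \in ball e n y -> z \in ball e n.+1 x.
Proof. move=> H Hz; have H1 : y \in ball e 1 x by rewrite ball1 H orbT.
exact: (ball_trans H1 Hz). Qed.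

Lemma ball_first n x y : y \in ball e n.+1 x -> y = x \/ exists c, e x c /\ y \in ball e n c.
Proof.
elim: n y => [|n IH] y.
  rewrite ball1 => /orP [/eqP ->|H]; [by left|right; exists y; by rewrite ball0].
rewrite ballS => /orP [/IH [->|[c [Hc Hy]]]|/existsP [d /andP [Hd Hdy]]].
- by left.
- by right; exists c; split => //; apply: ball_step.
- case: (IH _ Hd) => [Edx|[c [Hc Hdc]]].
    right; exists y; split; first by rewrite -Edx.
    by apply: (ball_mono (m := 0)) => //; rewrite ball0.
  by right; exists c; split => //; apply: ball_last Hdc Hdy.
Qed.

Hypothesis sym : symmetric e.

Lemma ball_sym n x y : y \in ball e n x -> x \in ball e n y.
Proof.
elim: n x y => [|n IH] x y.
  by rewrite !ball0 eq_sym.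
rewrite ballS => /orP [/IH H|/existsP [c /andP [Hc Hcy]]]; first exact: ball_step.
apply: (ball_edge (y := c)); first by rewrite sym.
exact: IH.
Qed.

Lemma leaf_nb l a b : leaf e l -> e l a -> e l b -> a = b.
Proof.
rewrite /leaf => /cards1P [c Hc] Ha Hb.
have : a \in nbhd e l by rewrite inE.
have : b \in nbhd e l by rewrite inE.
by rewrite Hc !inE => /eqP -> /eqP ->.
Qed.

Lemma leaf_step n l s b : leaf e l -> e l s -> b != l -> b \in ball e n.+1 l -> b \in ball e n s.
Proof.
move=> Hl Hs Hb /ball_first [Eb|[c [Hc Hbc]]]; first by rewrite Eb eqxx in Hb.
by rewrite (leaf_nb Hl Hs Hc).
Qed.

Lemma leaf_step' n l s b : leaf e l -> e l s -> b \in ball e n.+1 l -> b \in ball e n.+1 s.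
Proof.
move=> Hl Hs Hb; case: (eqVneq b l) => [->|Hne].
  apply: (ball_mono (m := 1)) => //; rewrite ball1 sym Hs orbT //.
by apply: ball_step; apply: leaf_step Hb.
Qed.

Lemma dist_gt n x y : n < #|T| -> (n < dist e x y) = (y \notin ball e n x).
Proof.
move=> HnT; rewrite /dist; case Hy: (y \in ball e n x) => /=.
  apply/negbTE; rewrite -leqNgt.
  exact: (bigmin_le (fun i : 'I_#|T| => nat_of_ord i) _ (i0 := Ordinal HnT)).
apply: (big_ind (fun v => n < v)) => //.
  by move=> a b Ha Hb; rewrite leq_min Ha Hb.
move=> i Hi; rewrite ltnNge; apply/negP => Hle.
by rewrite (ball_mono Hle Hi) in Hy.
Qed.

Lemma dist3 x y : 3 <= #|T| -> (3 <= dist e x y) = (y \notin ball e 2 x).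
Proof. by move=> H; apply: dist_gt. Qed.

Definition lf (s : T) : T := odflt s [pick y in [set y in nbhd e s | leaf e y]].

Lemma lfP s : weak_support e s -> e s (lf s) /\ leaf e (lf s).
Proof.
rewrite /weak_support /lf; case: pickP => [y|H0].
  by rewrite !inE => /andP [H1 H2].
move=> /eqP H1; exfalso.
have : #|[set y in nbhd e s | leaf e y]| = 0.
  by apply: eq_card0 => y; rewrite /= H0.
by rewrite H1.
Qed.

Section Dom.
Hypothesis T3 : 3 <= #|T|.
Hypothesis Hmax : max_packing2 e (weak_supports e).
Let S := weak_supports e.

Lemma pack_ball u v : u \in S -> v \in S -> u != v -> v \notin ball e 2 u.
Proof. by move=> Hu Hv Huv; rewrite -dist3 //; apply: Hmax.1. Qed.

Lemma KL u v a b : u \in S -> v \in S -> u != v ->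
  (a = u \/ (e u a /\ leaf e a)) -> (b = v \/ (e v b /\ leaf e b)) ->
  b \notin ball e 2 a.
Proof.
move=> Hu Hv Huv Ha Hb.
have P1 := pack_ball Hu Hv Huv.
have P2 := pack_ball Hv Hu (ltac:(by rewrite eq_sym)).
case: Ha => [->|[Hua Hla]]; case: Hb => [->|[Hvb Hlb]] //.
- apply/negP => /ball_sym H; have H' := leaf_step' Hlb (s := v) (ltac:(by rewrite sym)) H.
  by rewrite H' in P2.
- apply/negP => H; have H' := leaf_step' Hla (s := u) (ltac:(by rewrite sym)) H.
  by rewrite H' in P1.
- apply/negP => H.
  case: (eqVneq b a) => [Eba|Hne].
    have Euv := leaf_nb (a := u) (b := v) Hla (ltac:(by rewrite sym)) (ltac:(by rewrite sym -Eba)).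
    by rewrite Euv eqxx in Huv.
  have H1 := leaf_step Hla (s := u) (n := 1) (ltac:(by rewrite sym)) Hne H.
  have H2 := ball_sym H1.
  case: (eqVneq u b) => [Eub|Hub].
    have : u \in ball e 2 v by apply: (ball_mono (m:=1)) => //; rewrite ball1 Eub Hvb orbT.
    by rewrite (negbTE P2).
  have := leaf_step Hlb (s := v) (n := 0) (ltac:(by rewrite sym)) Hub H2.
  by rewrite ball0 => /eqP Euv; rewrite Euv eqxx in Huv.
Qed.

Lemma dominate z : exists2 s, s \in S & s \in ball e 1 z.
Proof.
case: (boolP [exists s in S, s \in ball e 1 z]) => [/existsP [s /andP [Hs Hb]]|Hno].
  by exists s.
have Hno' : forall s, s \in S -> s \notin ball e 1 z.
  move=> s Hs; apply/negP => Hb; apply: (negP Hno); apply/existsP; exists s; by rewrite Hs Hb.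
exfalso.
pose f s := if s \in ball e 2 z then lf s else s.
have fP : forall s, s \in S -> f s = s \/ (e s (f s) /\ leaf e (f s)).
  move=> s Hs; rewrite /f; case: ifP => _; [right|by left].
  by apply: lfP; move: Hs; rewrite inE.
have KZ : forall s, s \in S -> f s \notin ball e 2 z.
  move=> s Hs; rewrite /f; case: ifP => Hs2 //; last by rewrite Hs2.
  have [Hsl Hl] : e s (lf s) /\ leaf e (lf s) by apply: lfP; move: Hs; rewrite inE.
  apply/negP => /ball_sym H.
  case: (eqVneq z (lf s)) => [Ez|Hz].
    by move: (Hno' _ Hs); rewrite ball1 Ez sym Hsl orbT.
  have := leaf_step Hl (s := s) (n := 1) (ltac:(by rewrite sym)) Hz H => /ball_sym.
  by rewrite (negbTE (Hno' _ Hs)).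
have KL' : forall s t, s \in S -> t \in S -> s != t -> f t \notin ball e 2 (f s).
  by move=> s t Hs Ht Hst; apply: KL Hs Ht Hst (fP _ Hs) (fP _ Ht).
have finj : {in S &, injective f}.
  move=> s t Hs Ht Efst; apply/eqP; apply/negPn/negP => Hst.
  have := KL' _ _ Hs Ht Hst; rewrite -Efst.
  by rewrite (ball_mono (m := 0)) // ball0.
pose P := z |: [set f s | s in S].
have zP : z \notin [set f s | s in S].
  apply/negP => /imsetP [s Hs Ez].
  by move: (KZ _ Hs); rewrite -Ez (ball_mono (m := 0)) // ball0.
have cardP : #|P| = #|S|.+1 by rewrite cardsU1 zP card_in_imset.
have packP : packing2 e P.
  move=> a b Ha Hb Hab; rewrite dist3 //.
  move: Ha Hb Hab; rewrite /P => /setU1P [->|/imsetP [s Hs ->]] /setU1P [->|/imsetP [t Ht ->]].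
  - by rewrite eqxx.
  - by move=> _; apply: KZ.
  - by move=> _; apply/negP => /ball_sym; apply/negP; apply: KZ.
  - move=> Hne; apply: KL' => //; apply/negP => /eqP Est; by rewrite Est eqxx in Hne.
have := Hmax.2 _ packP; rewrite cardP.
by rewrite ltnn.
Qed.

End Dom.
End Aux.

Theorem claim2 (T : finType) (e : rel T) :
  is_tree e -> 6 <= #|T| ->
  max_packing2 e (weak_supports e) ->
  forall x, x \in weak_supports e ->
    dist_set e x (weak_supports e :\ x) = 3.
Proof.
move=> [[sym irr] conn acyc] H6 Hmax x Hx.
have T3 : 3 <= #|T| by apply: leq_trans H6.
have [Hxl Hl] := lfP (ltac:(by move: Hx; rewrite inE) : weak_support e x).
set l := lf e x in Hxl Hl.
have [y Hxy Hyl] : exists2 y, e x y & y != l.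
  case: (boolP [exists y, e x y && (y != l)]) => [/existsP [y /andP [H1 H2]]|H]; first by exists y.
  exfalso.
  have Hall : forall y, e x y -> y = l.
    move=> y Hy; apply/eqP; apply/negPn/negP => Hne; apply: (negP H); apply/existsP; exists y.
    by rewrite Hy Hne.
  have clos : forall p a, a \in [set x; l] -> path e a p -> last a p \in [set x; l].
    elim=> [|b p IH] a Ha //= /andP [Hab Hp]; apply: IH Hp.
    move: Ha; rewrite !inE => /orP [/eqP Ea|/eqP Ea].
    - by rewrite (Hall b) ?eqxx ?orbT // -Ea.
    - rewrite (leaf_nb (a := b) (b := x) Hl) ?eqxx //; [by rewrite -Ea | by rewrite sym].
  have : [set: T] \subset [set x; l].
    apply/subsetP => v _; move: (conn x v) => /connectP [p Hp ->].
    by apply: clos Hp; rewrite !inE eqxx.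
  move/subset_leq_card; rewrite cardsT cards2 => H'.
  by have := leq_trans H6 H'; case: (x != l).
have Hyleaf : ~~ leaf e y.
  apply/negP => Hly.
  move: Hx; rewrite inE /weak_support => /cards1P [c Hc].
  have : y \in [set y in nbhd e x | leaf e y] by rewrite !inE Hxy Hly.
  have : l \in [set y in nbhd e x | leaf e y] by rewrite !inE Hxl Hl.
  by rewrite Hc !inE => /eqP El /eqP Eyc; rewrite Eyc -El eqxx in Hyl.
have [z Hyz Hzx] : exists2 z, e y z & z != x.
  case: (boolP (nbhd e y \subset [set x])) => [Hsub|/subsetPn [z Hz Hzx]]; last first.
    by exists z; [rewrite inE in Hz | rewrite inE in Hzx].
  exfalso; apply: (negP Hyleaf); rewrite /leaf eqn_leq.
  have := subset_leq_card Hsub; rewrite cards1 => -> /=.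
  by apply/card_gt0P; exists x; rewrite inE sym.
have nxy : x != y by apply/eqP => E; move: Hxy; rewrite E irr.
have nyz : y != z by apply/eqP => E; move: Hyz; rewrite E irr.
have Hz1 : z \notin ball e 1 x.
  rewrite ball1 negb_or Hzx /=; apply/negP => Hxz.
  have U : uniq [:: x; y; z] by rewrite /= !inE negb_or nxy eq_sym Hzx nyz.
  have := acyc x [:: y; z]; rewrite /= Hxy Hyz /= => /(_ erefl U erefl).
  by rewrite sym Hxz.
have [s Hs Hsz] := dominate sym T3 Hmax z.
have Hz2 : z \in ball e 2 x.
  apply: (ball_edge Hxy); rewrite ball1 Hyz orbT //.
have Hs3 : s \in ball e 3 x by apply: (ball_trans (m := 2) (n := 1) Hz2 Hsz).
have Hsx : s != x.
  apply/eqP => E; move: Hsz; rewrite E => /(ball_sym sym) H.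
  by rewrite H in Hz1.
rewrite /dist_set; apply/eqP; rewrite eqn_leq; apply/andP; split.
  apply: leq_trans (bigmin_le (fun y => dist e x y) _ (i0 := s) _) _.
    by rewrite in_setD1 Hsx Hs.
  by rewrite leqNgt dist_gt ?Hs3 // (leq_trans _ H6).
apply: (big_ind (fun v => 3 <= v)) => //.
  by move=> a b Ha Hb; rewrite leq_min Ha Hb.
move=> w; rewrite in_setD1 => /andP [Hwx Hw].
by apply: Hmax.1 => //; rewrite eq_sym.
Qed.
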